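(* There exists a sequence $f_{1,\infty}=(f_1,f_2,\dots)$ of surjective continuous maps from $I=[0,1]$ to itself (not converging uniformly) such that the nonautonomous system $(I,f_{1,\infty})$ has positive topological entropy, $h(f_{1,\infty})>0$, and is not Li–Yorke chaotic.
   Context: A nonautonomous dynamical system (NDS) $(X,f_{1,\infty})$ consists of a compact metric space $(X,\varrho)$ and a sequence $f_{1,\infty}=(f_n)_{n\ge1}$ of continuous maps $X\to X$, with iterates $f_1^0(x)=x$, $f_1^n=f_n\circ\dots\circ f_1$. Li–Yorke pair: distinct $x,y$ with $\limsup_{n}\varrho(f_1^n(x),f_1^n(y))>0$ and $\liminf_{n}\varrho(f_1^n(x),f_1^n(y))=0$; the NDS is Li–Yorke chaotic if $X$ contains an uncountable set any two distinct points of which form a Li–Yorke pair. Topological entropy: put $\varrho_n(x,y)=\max_{0\le j\le n-1}\varrho(f_1^{j}(x),f_1^{j}(y))$; $E$ is $(n,\varepsilon)$-separated if $\varrho_n(x,y)>\varepsilon$ for distinct $x,y\in E$; with $s_n(\varepsilon)$ the maximal cardinality of such a set, $h(f_{1,\infty})=\lim_{\varepsilon\to0}\limsup_{n\to\infty}\frac1n\log s_n(\varepsilon)$. *)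

(* Defs.v *)
From Stdlib Require Import Reals List.
Import ListNotations.
Open Scope R_scope.

Definition I01 (x : R) : Prop := 0 <= x <= 1.
Definition rho (x y : R) : R := Rabs (x - y).

(* A nonautonomous system is a sequence f : nat -> R -> R; only the maps
   f 1, f 2, ... are used (f_n = f n); f 0 is irrelevant. *)

Definition maps_into_I (g : R -> R) : Prop := forall x, I01 x -> I01 (g x).
Definition continuous_on_I (g : R -> R) : Prop :=
  forall x, I01 x -> forall eps, 0 < eps -> exists delta, 0 < delta /\
    forall y, I01 y -> rho y x < delta -> rho (g y) (g x) < eps.
Definition surjective_on_I (g : R -> R) : Prop :=
  forall y, I01 y -> exists x, I01 x /\ g x = y.

Fixpoint iter (f : nat -> R -> R) (n : nat) (x : R) : R :=
  match n with
  | O => x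
  | S m => f (S m) (iter f m x)
  end.

Definition converges_uniformly (f : nat -> R -> R) : Prop :=
  exists g : R -> R, forall eps, 0 < eps -> exists N : nat,
    forall n, (N <= n)%nat -> forall x, I01 x -> rho (f n x) (g x) < eps.

Definition limsup_dist_pos (f : nat -> R -> R) (x y : R) : Prop :=
  exists delta, 0 < delta /\ forall N : nat, exists n, (N <= n)%nat /\
    delta < rho (iter f n x) (iter f n y).
Definition liminf_dist_zero (f : nat -> R -> R) (x y : R) : Prop :=
  forall eps, 0 < eps -> forall N : nat, exists n, (N <= n)%nat /\
    rho (iter f n x) (iter f n y) < eps.
Definition LiYorke_pair (f : nat -> R -> R) (x y : R) : Prop :=
  x <> y /\ limsup_dist_pos f x y /\ liminf_dist_zero f x y.

Definition countable_set (S : R -> Prop) : Prop :=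
  exists c : R -> nat, forall x y, S x -> S y -> c x = c y -> x = y.

Definition LiYorke_chaotic (f : nat -> R -> R) : Prop :=
  exists S : R -> Prop, (forall x, S x -> I01 x) /\ ~ countable_set S /\
    forall x y, S x -> S y -> x <> y -> LiYorke_pair f x y.

(* Bowen metric rho_n(x,y) = max_{0<=j<=n-1} rho(f_1^j x, f_1^j y);
   rho_n(x,y) > eps iff some j < n has rho(f_1^j x, f_1^j y) > eps. *)
Definition bowen_gt (f : nat -> R -> R) (n : nat) (eps x y : R) : Prop :=
  exists j, (j < n)%nat /\ eps < rho (iter f j x) (iter f j y).

Definition separated (f : nat -> R -> R) (n : nat) (eps : R) (E : list R) : Prop :=
  NoDup E /\ (forall x, In x E -> I01 x) /\
  forall x y, In x E -> In y E -> x <> y -> bowen_gt f n eps x y.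

(* s_n(eps) >= k : there is an (n,eps)-separated set of cardinality k *)
Definition sep_card_ge (f : nat -> R -> R) (n : nat) (eps : R) (k : nat) : Prop :=
  exists E, separated f n eps E /\ length E = k.

(* h(f) = lim_{eps->0} limsup_n (1/n) log s_n(eps) > 0.
   Since s_n(eps) is nonincreasing in eps, the limit in eps is the supremum
   over eps > 0, so h > 0 iff for some eps > 0 the limsup is > 0, i.e. iff
   there are eps > 0 and c > 0 with (1/n) log s_n(eps) > c for infinitely
   many n (equivalently, s_n(eps) >= k for some k with (1/n) ln k > c). *)
Definition positive_entropy (f : nat -> R -> R) : Prop :=
  exists eps, 0 < eps /\ exists c, 0 < c /\
    forall N : nat, exists n, (N <= n)%nat /\ (0 < n)%nat /\
      exists k, sep_card_ge f n eps k /\ c < ln (INR k) / INR n.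

(* Main.v *)
Require Import Defs.
From Stdlib Require Import Reals List.
From Stdlib Require Import PeanoNat Lra Lia IndefiniteDescription Classical.
Open Scope R_scope.

Definition Amap (y:R) : R :=
  if Rle_dec y (1/6) then 3*y else if Rle_dec y (1/3) then 1-3*y
  else if Rle_dec y (1/2) then 3*y-1 else y.
Definition Cmap (y:R) : R := if Rle_dec y (1/2) then 0 else 2*y-1.
Definition isC (n:nat) : bool := Nat.eqb (2 ^ Nat.log2 n) n.
Definition fsys (n:nat) (y:R) : R := if isC n then Cmap y else Amap y.

Lemma isC_pow m : isC (2^m) = true.
Proof. unfold isC. rewrite Nat.log2_pow2 by lia. apply Nat.eqb_refl. Qed.

Lemma isC_mid m j : (2^m < j < 2^(S m))%nat -> isC j = false.
Proof.
  intros H. unfold isC. rewrite (Nat.log2_unique j m) by lia.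
  apply Nat.eqb_neq. lia.
Qed.

Lemma pow2_pos m : (1 <= 2^m)%nat.
Proof. induction m; simpl; lia. Qed.

Lemma A_lip x y : Rabs (Amap y - Amap x) <= 3 * Rabs (y - x).
Proof. unfold Amap; repeat destruct Rle_dec; split_Rabs; lra. Qed.
Lemma C_lip x y : Rabs (Cmap y - Cmap x) <= 3 * Rabs (y - x).
Proof. unfold Cmap; repeat destruct Rle_dec; split_Rabs; lra. Qed.

Lemma lip_cont g : (forall x y, Rabs (g y - g x) <= 3 * Rabs (y - x)) -> continuous_on_I g.
Proof.
  intros H x _ eps He. exists (eps/3). split. lra.
  intros y _ Hy. unfold rho in *. specialize (H x y). lra.
Qed.

Lemma A_I y : I01 y -> I01 (Amap y).
Proof. unfold I01, Amap; intros; repeat destruct Rle_dec; lra. Qed.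
Lemma C_I y : I01 y -> I01 (Cmap y).
Proof. unfold I01, Cmap; intros; repeat destruct Rle_dec; lra. Qed.

Lemma A_third z : 0 <= z <= 1/2 -> Amap (z/3) = z.
Proof. intros; unfold Amap; repeat destruct Rle_dec; lra. Qed.
Lemma A_third1 z : 0 <= z <= 1/2 -> Amap ((z+1)/3) = z.
Proof. intros; unfold Amap; repeat destruct Rle_dec; lra. Qed.
Lemma A_high y : 1/2 < y -> Amap y = y.
Proof. intros; unfold Amap; repeat destruct Rle_dec; lra. Qed.
Lemma A_low y : 0 <= y <= 1/2 -> 0 <= Amap y <= 1/2.
Proof. intros; unfold Amap; repeat destruct Rle_dec; lra. Qed.

Lemma A_surj : surjective_on_I Amap.
Proof.
  intros z Hz. unfold I01 in *. destruct (Rle_dec z (1/2)).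
  - exists (z/3). split. lra. apply A_third; lra.
  - exists z. split. lra. apply A_high; lra.
Qed.
Lemma C_surj : surjective_on_I Cmap.
Proof.
  intros z Hz. unfold I01 in *. exists ((z+1)/2). split. lra.
  unfold Cmap; destruct Rle_dec; lra.
Qed.

Lemma f_I n y : I01 y -> I01 (fsys n y).
Proof. unfold fsys; destruct isC; [apply C_I|apply A_I]. Qed.
Lemma f_surj n : surjective_on_I (fsys n).
Proof. unfold fsys; destruct isC; [apply C_surj|apply A_surj]. Qed.
Lemma f_zero n : fsys n 0 = 0.
Proof. unfold fsys, Cmap, Amap; destruct isC; repeat destruct Rle_dec; lra. Qed.

Lemma iter_I n x : I01 x -> I01 (iter fsys n x).
Proof. induction n; simpl; auto. intros; apply f_I; auto. Qed.

Lemma iter_surj n z : I01 z -> exists x, I01 x /\ iter fsys n x = z.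
Proof.
  revert z. induction n; intros z Hz.
  - exists z; auto.
  - destruct (f_surj (S n) z Hz) as [w [Hw Hw']].
    destruct (IHn w Hw) as [x [Hx Hx']]. exists x. split; auto. simpl. rewrite Hx'. auto.
Qed.

Lemma iter_A n k x : (forall i, (1 <= i <= k)%nat -> isC (n+i) = false) ->
  iter fsys (n+k) x = Nat.iter k Amap (iter fsys n x).
Proof.
  induction k; intros H.
  - rewrite Nat.add_0_r. reflexivity.
  - rewrite Nat.add_succ_r. simpl. unfold fsys at 1.
    rewrite <- Nat.add_succ_r, H by lia. rewrite IHk; auto.
    intros; apply H; lia.
Qed.

Lemma Aiter_low k y : 0 <= y <= 1/2 -> 0 <= Nat.iter k Amap y <= 1/2.
Proof. induction k; simpl; auto. intros; apply A_low; auto. Qed.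
Lemma Aiter_high k y : 1/2 < y -> Nat.iter k Amap y = y.
Proof. induction k; simpl; auto. intros; rewrite IHk; auto; apply A_high; auto. Qed.

Lemma block_step m x : iter fsys (2^(S m)) x =
  Cmap (Nat.iter (2^m - 1) Amap (iter fsys (2^m) x)).
Proof.
  pose proof (pow2_pos m).
  replace (2^(S m))%nat with (S (2^m + (2^m - 1))) by (simpl; lia).
  simpl iter. unfold fsys at 1.
  replace (S (2^m + (2^m - 1))) with (2^(S m))%nat by (simpl; lia).
  rewrite isC_pow. f_equal. apply iter_A.
  intros i Hi. apply (isC_mid m). simpl; lia.
Qed.

Lemma invariant x : I01 x -> forall m,
  iter fsys (2^m) x = 0 \/ 1 - iter fsys (2^m) x = 2^(S m) * (1-x).
Proof.
  intros Hx. induction m.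
  - simpl. unfold fsys. change (isC 1) with true. unfold Cmap.
    destruct Rle_dec; [left; auto | right; lra].
  - rewrite block_step.
    pose proof (iter_I (2^m) x Hx) as HI. unfold I01 in HI.
    set (y := iter fsys (2^m) x) in *.
    destruct (Rle_dec y (1/2)).
    + left. pose proof (Aiter_low (2^m-1) y ltac:(lra)).
      unfold Cmap; destruct Rle_dec; lra.
    + rewrite Aiter_high by lra. right. unfold Cmap; destruct Rle_dec; try lra.
      destruct IHm as [H|H]; [lra|].
      change (2^(S (S m))) with (2 * 2^(S m)). rewrite Rmult_assoc, <- H. lra.
Qed.

Lemma INR_le_pow2 n : INR n <= 2^n.
Proof.
  induction n. simpl; lra. rewrite S_INR. simpl.
  pose proof (pow_R1_Rle 2 n ltac:(lra)). lra.
Qed.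

Lemma stay_zero k d x : iter fsys k x = 0 -> iter fsys (k + d) x = 0.
Proof.
  intros H. induction d. rewrite Nat.add_0_r; auto.
  rewrite Nat.add_succ_r. simpl. rewrite IHd. apply f_zero.
Qed.

Lemma eventually_zero x : I01 x -> x < 1 ->
  exists N, forall n, (N <= n)%nat -> iter fsys n x = 0.
Proof.
  intros Hx Hx1.
  destruct (INR_archimed (1-x) 1 ltac:(lra)) as [M HM].
  assert (HP : 1 < 2^(S M) * (1-x)).
  { pose proof (INR_le_pow2 M). change (2^(S M)) with (2*2^M).
    assert (INR M * (1-x) <= 2^M * (1-x)) by (apply Rmult_le_compat_r; lra).
    pose proof (pow_R1_Rle 2 M ltac:(lra)). nra. }
  assert (H0 : iter fsys (2^M) x = 0).
  { destruct (invariant x Hx M) as [H|H]; auto.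
    pose proof (iter_I (2^M) x Hx). unfold I01 in *. lra. }
  exists (2^M)%nat. intros n Hn. replace n with (2^M + (n - 2^M))%nat by lia.
  apply stay_zero; auto.
Qed.

Lemma not_LY : ~ LiYorke_chaotic fsys.
Proof.
  intros [S [HSI [Hnc HLY]]]. apply Hnc.
  exists (fun x => if Req_EM_T x 1 then 0%nat else 1%nat).
  intros x y Hx Hy Hc.
  destruct (Req_EM_T x 1) as [a|a], (Req_EM_T y 1) as [b|b]; try discriminate; try congruence.
  destruct (classic (x = y)) as [E|E]; auto. exfalso.
  destruct (HLY x y Hx Hy E) as [_ [[d [Hd Hl]] _]].
  pose proof (HSI x Hx) as Ix. pose proof (HSI y Hy) as Iy.
  destruct (eventually_zero x Ix) as [N1 H1]. unfold I01 in Ix; lra.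
  destruct (eventually_zero y Iy) as [N2 H2]. unfold I01 in Iy; lra.
  destruct (Hl (N1+N2)%nat) as [n [Hn Hd']].
  rewrite H1, H2 in Hd' by lia. unfold rho in Hd'.
  rewrite Rminus_0_r, Rabs_R0 in Hd'. lra.
Qed.

Lemma not_unif : ~ converges_uniformly fsys.
Proof.
  intros [g Hg]. destruct (Hg (1/8) ltac:(lra)) as [N HN].
  pose proof (Nat.pow_gt_lin_r 2 (S N) ltac:(lia)) as HP.
  assert (h1 := HN (2^(S N))%nat ltac:(lia) (1/2) ltac:(unfold I01; lra)).
  assert (h2 := HN (S (2^(S N)))%nat ltac:(lia) (1/2) ltac:(unfold I01; lra)).
  unfold fsys in h1, h2. rewrite isC_pow in h1.
  rewrite (isC_mid (S N)) in h2 by (simpl in *; lia).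
  unfold rho, Cmap, Amap in *. repeat destruct Rle_dec; try lra.
  split_Rabs; lra.
Qed.

Fixpoint allb (L : nat) : list (list bool) :=
  match L with
  | O => nil :: nil
  | S L' => map (cons true) (allb L') ++ map (cons false) (allb L')
  end.

Lemma allb_len L : length (allb L) = (2^L)%nat.
Proof. induction L; simpl; auto. rewrite length_app, !length_map, IHL. lia. Qed.

Lemma allb_in L s : In s (allb L) -> length s = L.
Proof.
  revert s; induction L; simpl; intros s H.
  - destruct H as [H|[]]; subst; auto.
  - apply in_app_or in H. destruct H as [H|H]; apply in_map_iff in H;
    destruct H as [t [<- Ht]]; simpl; f_equal; auto.
Qed.

Lemma NoDup_map_inj {A B} (f : A -> B) l :
  (forall a b, In a l -> In b l -> f a = f b -> a = b) -> NoDup l -> NoDup (map f l).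
Proof.
  induction l; simpl; intros H Hn. constructor.
  inversion Hn; subst. constructor.
  - intros Hi. apply in_map_iff in Hi. destruct Hi as [b [Hb Hb']].
    assert (b = a) by (apply H; auto). subst; contradiction.
  - apply IHl; auto.
Qed.

Lemma allb_nodup L : NoDup (allb L).
Proof.
  induction L; simpl. constructor. simpl; auto. constructor.
  apply NoDup_app.
  - apply NoDup_map_inj; auto. intros a b _ _ H; injection H; auto.
  - apply NoDup_map_inj; auto. intros a b _ _ H; injection H; auto.
  - intros a H1 H2. apply in_map_iff in H1, H2.
    destruct H1 as [t [<- _]]. destruct H2 as [u [H _]]. discriminate.
Qed.

Fixpoint zs (s : list bool) : R :=
  match s with
  | nil => 0
  | b :: s' => if b then (zs s' + 1)/3 else zs s' / 3
  end.

Lemma zs_range s : 0 <= zs s <= 1/2.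
Proof. induction s as [|b s IH]; simpl. lra. destruct b; lra. Qed.

Lemma A_zs b s : Amap (zs (b :: s)) = zs s.
Proof. pose proof (zs_range s). simpl; destruct b; [apply A_third1|apply A_third]; lra. Qed.

Lemma zs_sep s t : length s = length t -> s <> t ->
  exists i, (i < length s)%nat /\
    1/8 < Rabs (Nat.iter i Amap (zs s) - Nat.iter i Amap (zs t)).
Proof.
  revert t; induction s as [|b s IH]; intros t Hl Hne.
  - destruct t; simpl in *; [congruence|discriminate].
  - destruct t as [|b' t]; simpl in Hl; [discriminate|].
    destruct (Bool.bool_dec b b') as [<-|Hb].
    + assert (s <> t) by congruence.
      destruct (IH t ltac:(lia) H) as [i [Hi Hs]].
      exists (S i). split. simpl; lia.
      rewrite !Nat.iter_succ_r, !A_zs. auto.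
    + exists 0%nat. split. simpl; lia. simpl.
      pose proof (zs_range s). pose proof (zs_range t).
      destruct b, b'; try congruence; split_Rabs; lra.
Qed.

Lemma zs_I s : I01 (zs s).
Proof. pose proof (zs_range s). unfold I01; lra. Qed.

Definition pre (m : nat) (s : list bool) : R :=
  proj1_sig (constructive_indefinite_description _ (iter_surj (2^m) (zs s) (zs_I s))).

Lemma pre_spec m s : I01 (pre m s) /\ iter fsys (2^m) (pre m s) = zs s.
Proof. unfold pre. destruct constructive_indefinite_description; auto. Qed.

Lemma pre_sep m s t : length s = (2^m - 1)%nat -> length t = (2^m - 1)%nat -> s <> t ->
  bowen_gt fsys (2^(S m)) (1/8) (pre m s) (pre m t).
Proof.
  intros Hs Ht Hne. destruct (zs_sep s t ltac:(congruence) Hne) as [i [Hi Hsep]].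
  pose proof (pow2_pos m).
  exists (2^m + i)%nat. split. simpl; lia.
  unfold rho. rewrite !iter_A.
  - rewrite (proj2 (pre_spec m s)), (proj2 (pre_spec m t)). auto.
  - intros i' Hi'. apply (isC_mid m). simpl; lia.
  - intros i' Hi'. apply (isC_mid m). simpl; lia.
Qed.

Lemma entropy : positive_entropy fsys.
Proof.
  exists (1/8). split. lra.
  assert (Hl2 : 0 < ln 2) by (rewrite <- ln_1; apply ln_increasing; lra).
  exists (ln 2 / 8). split. lra.
  intros N. set (m := S N).
  pose proof (Nat.pow_gt_lin_r 2 (S m) ltac:(lia)).
  exists (2^(S m))%nat. split. lia. split. lia.
  exists (2^(2^m - 1))%nat. split.
  - exists (map (pre m) (allb (2^m - 1))). split; [|rewrite length_map, allb_len; auto].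
    split; [|split].
    + apply NoDup_map_inj; [|apply allb_nodup].
      intros a b Ha Hb He. destruct (classic (a = b)) as [E|E]; auto. exfalso.
      destruct (pre_sep m a b (allb_in _ _ Ha) (allb_in _ _ Hb) E) as [j [_ Hj]].
      rewrite He in Hj. unfold rho in Hj. rewrite Rminus_diag, Rabs_R0 in Hj. lra.
    + intros x Hx. apply in_map_iff in Hx. destruct Hx as [s [<- _]]. apply pre_spec.
    + intros x y Hx Hy Hxy. apply in_map_iff in Hx, Hy.
      destruct Hx as [s [<- Hs]]. destruct Hy as [t [<- Ht]].
      apply pre_sep; try (apply allb_in; auto). intros ->. auto.
  - assert (HL : INR (2 ^ (2^m - 1)) = 2 ^ (2^m - 1)).
    { rewrite pow_INR. f_equal. }
    rewrite HL, ln_pow by lra.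
    assert (H2 : 2 <= INR (2^m)).
    { rewrite pow_INR. change (INR 2) with 2. unfold m. simpl.
      pose proof (pow_R1_Rle 2 N ltac:(lra)). lra. }
    assert (Hn : INR (2^(S m)) = 2 * INR (2^m)).
    { rewrite !pow_INR. change (INR 2) with 2. simpl. ring. }
    rewrite Hn, minus_INR by (pose proof (pow2_pos m); lia).
    change (INR 1) with 1.
    apply Rmult_lt_reg_r with (2 * INR (2^m)). lra.
    replace ((INR (2^m) - 1) * ln 2 / (2 * INR (2^m)) * (2 * INR (2^m))) with ((INR (2^m) - 1) * ln 2) by (field; lra).
    nra.
Qed.

Theorem mainTheorem2 :
  exists f : nat -> R -> R,
    (forall n, (1 <= n)%nat ->
       maps_into_I (f n) /\ continuous_on_I (f n) /\ surjective_on_I (f n)) /\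
    ~ converges_uniformly f /\
    positive_entropy f /\
    ~ LiYorke_chaotic f.
Proof.
  exists fsys. split; [|split; [apply not_unif|split; [apply entropy|apply not_LY]]].
  intros n _. split; [intros y; apply f_I|split; [|apply f_surj]].
  unfold fsys; destruct isC; apply lip_cont; [apply C_lip|apply A_lip].
Qed.
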